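(* Let $(\mathcal{G},\mu)$ be an edge partition, $B\subseteq\mathcal{N}$ and $\zeta\in\Theta_\mathcal{G}(B)$. Let \[\mathcal{E}_\zeta=\{E\subseteq\zeta\cap\operatorname{im}\mu : (\zeta\setminus E)\cup\mu^*(E)\in\Theta_\mathcal{G}(B)\}.\] Then $\mathcal{E}_\zeta$ is closed under union: if $E_1,E_2\in\mathcal{E}_\zeta$ then $E_1\cup E_2\in\mathcal{E}_\zeta$.
   Context: $R$ is a partially ordered ring; $\mathcal{G}=(\mathcal{N},\mathcal{E})$ is a multidigraph with source/target maps $s,t\colon\mathcal{E}\to\mathcal{N}$, no self-loops, $\mathcal{N}=\{1,\dots,m+1\}$, labeling $\pi\colon\mathcal{E}\to R$. Trees/forests are subgraphs whose underlying undirected graph is acyclic (connected for trees); a tree is rooted at $N$ if $N$ is its only node without outgoing edges; spanning forests have node set $\mathcal{N}$ and are identified with their edge sets. $\Theta_\mathcal{G}(B)$ is the set of spanning forests with $|B|$ connected components, each a tree rooted at a node of $B$. A cycle is a closed directed path with no repeated nodes. $\mathcal{E}^-=\{e:\pi(e)\in R_{<0}\}$, $\mathcal{E}^+=\{e:\pi(e)\in R_{>0}\}$. A pair $(\mathcal{G},\mu)$ with $\mu\colon\mathcal{E}^-\to\mathcal{P}(\mathcal{E}^+)$ is an edge partition if (i) $\mathcal{E}=\mathcal{E}^+\sqcup\mathcal{E}^-$; (ii) every cycle contains at most one edge of $\mathcal{E}^-$; (iii) for each $e\in\mathcal{E}^-$: (a) $e'\in\mu(e)\Rightarrow s(e')=s(e)$;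 (b) $e'\in\mu(e)\Rightarrow$ every cycle containing $e'$ contains $t(e)$; (c) $\mu(e)\cap\mu(e')=\emptyset$ for $e\neq e'$. $\operatorname{im}\mu=\bigcup_{e\in\mathcal{E}^-}\mu(e)$ and $\mu^*\colon\operatorname{im}\mu\to\mathcal{E}^-$ is given by $\mu^*(e')=e$ if $e'\in\mu(e)$. *)

(* Defs.v *)
From HB Require Import structures.
From mathcomp Require Import all_boot all_order all_algebra.
Set Implicit Arguments. Unset Strict Implicit. Unset Printing Implicit Defensive.
Import Order.TTheory GRing.Theory Num.Theory.
Local Open Scope ring_scope.

(* Multidigraph: nodes 'I_m.+1 (= {1,...,m+1}), finite edge type E,
   source/target maps s t.  Subgraphs/spanning forests are edge sets. *)
Section Graph.
Variables (m : nat) (E : finType) (s t : E -> 'I_m.+1).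

Definition joins (e : E) (x y : 'I_m.+1) : bool :=
  ((s e == x) && (t e == y)) || ((s e == y) && (t e == x)).

(* undirected cycle in the subgraph with edge set F: distinct edges es and
   distinct vertices vs, with the i-th edge joining vs_i and vs_(i+1 mod k) *)
Definition ucycle_in (F : {set E}) (es : seq E) (vs : seq 'I_m.+1) : bool :=
  [&& 0 < size es, size vs == size es, uniq es, uniq vs, all (mem F) es &
      all (fun p => joins p.1 p.2.1 p.2.2) (zip es (zip vs (rot 1 vs)))]%N.

Definition acyclic (F : {set E}) : Prop :=
  forall es vs, ~~ ucycle_in F es vs.

Definition uadj (F : {set E}) : rel 'I_m.+1 :=
  fun x y => [exists e in F, joins e x y].

Definition comp (F : {set E}) (x : 'I_m.+1) : {set 'I_m.+1} :=
  [set y | connect (uadj F) x y].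

Definition components (F : {set E}) : {set {set 'I_m.+1}} :=
  [set comp F x | x : 'I_m.+1].

(* Theta_G(B): spanning forests with |B| components, each a tree rooted at a
   node of B (the root is the only node of the tree without outgoing edges) *)
Definition in_Theta (B : {set 'I_m.+1}) (F : {set E}) : Prop :=
  [/\ acyclic F,
      #|components F| = #|B| &
      forall C, C \in components F ->
        exists2 b, b \in B & [set v in C | [forall e in F, s e != v]] = [set b]].

Definition dcycle (p : seq E) : bool :=
  [&& 0 < size p, uniq (map s p) &
      all (fun q => t q.1 == s q.2) (zip p (rot 1 p))]%N.

Variables (R : porderZmodType) (pi : E -> R) (mu : E -> {set E}).

(* (G, mu) is an edge partition; mu is only relevant on E^- *)
Definition edge_partition : Prop :=
  [/\ (forall e, (0 < pi e) || (pi e < 0)),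
      (forall p, dcycle p -> (count (fun e => (pi e < 0)%R) p <= 1)%N) &
      forall e, pi e < 0 ->
        [/\ (forall e', e' \in mu e -> 0 < pi e'),
            (forall e', e' \in mu e -> s e' = s e),
            (forall e', e' \in mu e -> forall p, dcycle p -> e' \in p ->
                 t e \in map s p) &
            (forall e2, pi e2 < 0 -> e != e2 -> [disjoint mu e & mu e2])]].

Definition im_mu : {set E} := \bigcup_(e | pi e < 0) mu e.

Definition mustar (S : {set E}) : {set E} :=
  [set e | (pi e < 0) && [exists e' in S, e' \in mu e]].

Definition in_Ezeta (B : {set 'I_m.+1}) (zeta S : {set E}) : Prop :=
  S \subset zeta :&: im_mu /\ in_Theta B ((zeta :\: S) :|: mustar S).

End Graph.

(* Main.v *)
Require Import Defs.
From HB Require Import structures.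
From mathcomp Require Import all_boot all_order all_algebra.
Import Defs.
Set Implicit Arguments. Unset Strict Implicit. Unset Printing Implicit Defensive.


Section Gen.
Variables (A : eqType) (r : rel A).

Lemma pathE x q : path r x q = all (fun pr => r pr.1 pr.2) (zip (x :: q) q).
Proof. by elim: q x => //= y q IH x; rewrite IH. Qed.

Lemma zip_cons_rcons x q (z : A) :
  zip (x :: q) (rcons q z) = rcons (zip (x :: q) q) (last x q, z).
Proof. by elim: q x => //= y q IH x; rewrite IH. Qed.

Lemma zip_catl (S T : Type) (a c : seq S) (b : seq T) :
  size b <= size a -> zip (a ++ c) b = zip a b.
Proof.
elim: a b => [|x a IH] [|y b] //=; first by case: c.
by rewrite ltnS => h; rewrite IH.
Qed.

Lemma cycleE p : cycle r p = all (fun pr => r pr.1 pr.2) (zip p (rot 1 p)).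
Proof.
case: p => // x q; rewrite rot1_cons /= pathE -cats1 -cat_cons zip_catl //.
by rewrite cats1 size_rcons.
Qed.
End Gen.

Lemma mem_zip2 (S T : eqType) (a : seq S) (b : seq T) u v :
  (u, v) \in zip a b -> u \in a /\ v \in b.
Proof.
elim: a b => [|x a IH] [|y b] //=; rewrite {1}in_cons => /orP[/eqP[-> ->]|/IH[h1 h2]].
  by split; rewrite ?eqxx ?mem_head.
by split; rewrite ?inE ?h1 ?h2 orbT.
Qed.

Lemma zip_mem1 (S T : eqType) (a : seq S) (b : seq T) u :
  size a = size b -> u \in a -> exists v, (u, v) \in zip a b.
Proof.
elim: a b => [|x a IH] [|y b] //= [hs]; rewrite {1}in_cons => /orP[/eqP->|/(IH _ hs)[v hv]].
  by exists y; rewrite ?inE eqxx.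
by exists v; rewrite ?inE hv orbT.
Qed.

Lemma norev (S : eqType) (x : S) q u v : uniq (x :: q) ->
  (u, v) \in zip (x :: q) q -> (v, u) \in zip (x :: q) q -> False.
Proof.
elim: q x => [|y q IH] x //= /andP[]; rewrite inE negb_or => /andP[xy xq] uq.
rewrite !inE => /orP[/eqP[-> ->]|h1] /orP[/eqP[e1 e2]|h2].
- by rewrite e1 eqxx in xy.
- by have [_ /= ] := mem_zip2 h2; rewrite (negbTE xq).
- by have [_] := mem_zip2 h1; rewrite e1 (negbTE xq).
- exact: IH uq h1 h2.
Qed.

Lemma zip3map (S T : eqType) (f : S -> T) (p q : seq S) :
  zip p (zip (map f p) (map f q)) = map (fun pr => (pr.1, (f pr.1, f pr.2))) (zip p q).
Proof. by elim: p q => [|x p IH] [|y q] //=; rewrite IH. Qed.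

Lemma count2 (S : eqType) (a : pred S) p f g : uniq p -> f \in p -> g \in p ->
  f != g -> a f -> a g -> 1 < count a p.
Proof.
move=> up fp gp fg af ag; rewrite (permP (perm_to_rem fp)) /= af.
have : has a (rem f p) by apply/hasP; exists g => //; rewrite mem_rem_uniq // inE eq_sym fg.
by rewrite has_count.
Qed.

Section G.
Variables (m : nat) (E : finType) (s t : E -> 'I_m.+1).
Local Notation V := 'I_m.+1.

Definition isroot (F : {set E}) (x : V) := [forall e in F, s e != x].
Definition out (F : {set E}) (x : V) := [pick e in F | s e == x].
Definition nxt (F : {set E}) x := if out F x is Some e then t e else x.
Definition rho (F : {set E}) x := iter m.+1 (nxt F) x.
Definition term (F : {set E}) := forall x, isroot F (rho F x).
Definition functional (F : {set E}) := {in F &, forall e1 e2, s e1 = s e2 -> e1 = e2}.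

Lemma nxt_root (F : {set E}) x : isroot F x -> nxt F x = x.
Proof.
rewrite /nxt /out; case: pickP => // e /andP[eF /eqP se] /forall_inP /(_ e eF).
by rewrite se eqxx.
Qed.

Lemma isrootN (F : {set E}) x : ~~ isroot F x ->
  exists e, [/\ out F x = Some e, e \in F, s e = x & nxt F x = t e].
Proof.
rewrite /nxt /out; case: pickP => [e /andP[eF /eqP se]|none] h.
  by exists e.
case/negP: h; apply/forall_inP => e eF; apply/negP => /eqP se.
by have := none e; rewrite eF se eqxx.
Qed.

Lemma isroot_src (F : {set E}) e : e \in F -> ~~ isroot F (s e).
Proof. by move=> eF; apply/negP => /forall_inP /(_ e eF); rewrite eqxx. Qed.

Lemma nxt_fun (F : {set E}) e : functional F -> e \in F -> nxt F (s e) = t e.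
Proof.
move=> fF eF; have [e' [_ e'F se' ->]] := isrootN (isroot_src eF).
by rewrite (fF _ _ e'F eF se').
Qed.

Lemma iter_fix (f : V -> V) x k : f x = x -> iter k f x = x.
Proof. by move=> fx; elim: k => //= k ->. Qed.

Lemma joinsC e x y : joins s t e x y = joins s t e y x.
Proof. by rewrite /joins orbC. Qed.

Lemma uadj_sym (F : {set E}) : symmetric (uadj s t F).
Proof.
move=> x y; apply/existsP/existsP => [][e /andP[eF j]]; exists e;
  by rewrite eF joinsC.
Qed.

Lemma connect_symF (F : {set E}) : connect_sym (uadj s t F).
Proof. exact/sym_connect_sym/uadj_sym. Qed.

Lemma connect_nxt (F : {set E}) x : connect (uadj s t F) x (nxt F x).
Proof.
case: (boolP (isroot F x)) => [/nxt_root -> //|/isrootN [e [_ eF se ->]]].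
apply: connect1; apply/existsP; exists e; by rewrite eF /joins se !eqxx.
Qed.

Lemma connect_iter (F : {set E}) x k : connect (uadj s t F) x (iter k (nxt F) x).
Proof.
elim: k => //= k IH; apply: connect_trans IH _; exact: connect_nxt.
Qed.

Lemma connect_subset (F F' : {set E}) x y : F' \subset F ->
  connect (uadj s t F') x y -> connect (uadj s t F) x y.
Proof.
move=> sub; apply: connect_sub => a b /existsP[e /andP[eF j]].
by apply: connect1; apply/existsP; exists e; rewrite (subsetP sub _ eF).
Qed.

Lemma ucycle_sub (F F' : {set E}) es vs : F' \subset F ->
  ucycle_in s t F' es vs -> ucycle_in s t F es vs.
Proof.
move=> sub /and5P[a b c d /andP[ee f]]; apply/and5P; split=> //.
apply/andP; split => //.
by apply/allP => e /(allP ee) /(subsetP sub).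
Qed.

Lemma dcycle_ucycle (F : {set E}) p : dcycle s t p -> all (mem F) p -> ucycle_in s t F p (map s p).
Proof.
case/and3P => p0 up hc hF; apply/and5P; split => //.
- by rewrite size_map.
- exact: map_uniq up.
apply/andP; split => //.
rewrite -map_rot zip3map all_map; apply: sub_all hc => -[a b] /= /eqP h.
by rewrite /joins /= h !eqxx.
Qed.

Lemma dcycleE p : dcycle s t p =
  [&& 0 < size p, uniq (map s p) & cycle (fun a b => t a == s b) p]%N.
Proof. by rewrite /dcycle cycleE. Qed.

Lemma DC (F : {set E}) x : ~~ isroot F (rho F x) ->
  exists p, dcycle s t p && all (mem F) p.
Proof.
move=> hx; set f := nxt F.
have [i io hi] : exists2 i, i < order f x & iter (order f x) f x = iter i f x.
  by apply/trajectP; apply: looping_order.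
have ole : order f x <= m.+1.
  rewrite -size_orbit -(card_uniqP (orbit_uniq f x)).
  by apply: leq_trans (max_card _) _; rewrite card_ord.
set y := iter i f x.
have cyc : fconnect f (f y) y.
  have : iter (order f x - i) f y = y by rewrite /y -iterD subnK ?hi // ltnW.
  have -> : (order f x - i = (order f x - i).-1.+1)%N by rewrite prednK // subn_gt0.
  by rewrite iterSr => {2}<-; apply: fconnect_iter.
have hcyc : fcycle f (orbit f y) by rewrite -fconnect_f.
have nr : forall z, z \in orbit f y -> ~~ isroot F z.
  move=> z zc; apply/negP => rz.
  have fzy : fconnect f z y by rewrite (fconnect_cycle hcyc zc) in_orbit.
  have yz : y = z by rewrite -(iter_findex fzy) iter_fix // /f nxt_root.
  move: hx; rewrite /rho.
  have -> : iter m.+1 (nxt F) x = iter (m.+1 - i) f y.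
    by rewrite /y -iterD subnK // ltnW // (leq_trans io).
  by rewrite yz iter_fix ?rz // /f nxt_root.
have [e0 _] := isrootN (nr y (in_orbit f y)).
pose oe z := odflt e0 (out F z).
have hoe : forall z, z \in orbit f y ->
    [/\ oe z \in F, s (oe z) = z & t (oe z) = f z].
  move=> z /nr /isrootN [e [h1 h2 h3 h4]].
  by rewrite /oe h1 /= /f h4.
exists (map oe (orbit f y)); rewrite dcycleE size_map size_orbit order_gt0 /=.
have -> : map s (map oe (orbit f y)) = orbit f y.
  rewrite -map_comp -{2}(map_id (orbit f y)); apply/eq_in_map => z /hoe [_ h _].
  exact: h.
rewrite orbit_uniq cycle_map /=; apply/andP; split.
  apply: (sub_in_cycle (P := mem (orbit f y))) hcyc; last by apply/allP.
  move=> a b ha hb /eqP hab; subst b.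
  by rewrite /relpre /=; have [_ _ ->] := hoe a ha; have [_ -> _] := hoe (f a) hb.
by rewrite all_map; apply/allP => z /hoe [].
Qed.

Lemma acyclic_term (F : {set E}) : acyclic s t F -> term F.
Proof.
move=> ac x; apply/negPn/negP => /DC [p /andP[dp hp]].
by have := ac p (map s p); rewrite (dcycle_ucycle dp hp).
Qed.

End G.

Section G2.
Variables (m : nat) (E : finType) (s t : E -> 'I_m.+1).
Local Notation V := 'I_m.+1.
Implicit Types F : {set E}.

Lemma ft_acyclic F : functional s F -> term s t F -> acyclic s t F.
Proof.
move=> fF tF es vs; apply/negP => /and5P[sz0 /eqP szeq ues uvs /andP[allF allJ]].
have ends : forall e, e \in es -> s e \in vs /\ t e \in vs.
  move=> e ee.
  have [[a b] hab] : exists v, (e, v) \in zip es (zip vs (rot 1 vs)).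
    by apply: zip_mem1 ee; rewrite size_zip size_rot minnn szeq.
  have [_ /mem_zip2 [av]] := mem_zip2 hab; rewrite mem_rot => bv.
  have := allP allJ _ hab; rewrite /joins /=.
  by case/orP => /andP[/eqP -> /eqP ->].
have injs : {in es &, injective s}.
  by move=> a b /(allP allF) aF /(allP allF) bF; apply: fF.
have hsub : {subset vs <= map s es}.
  have u1 : uniq (map s es) by rewrite map_inj_in_uniq.
  have s1 : {subset map s es <= vs} by move=> v /mapP [e ee ->]; case: (ends e ee).
  have s2 : size vs <= size (map s es) by rewrite size_map szeq.
  have [_ h] := uniq_min_size u1 s1 s2.
  by move=> v; rewrite h.
have clo : forall v, v \in vs -> nxt s t F v \in vs /\ ~~ isroot s F v.
  move=> v /hsub /mapP [e ee ->]; have eF := allP allF _ ee.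
  rewrite nxt_fun //; split; first by case: (ends e ee).
  exact: isroot_src.
have itv : forall v k, v \in vs -> iter k (nxt s t F) v \in vs.
  by move=> v k vv; elim: k => //= k IH; case: (clo _ IH).
have [e ee] : exists e, e \in es by case: (es) sz0 => // e ? _; exists e; rewrite mem_head.
have [sv _] := ends e ee.
by have [_ /negP] := clo _ (itv _ m.+1 sv); apply; apply: tF.
Qed.

Lemma rho_nxt F x : term s t F -> rho s t F (nxt s t F x) = rho s t F x.
Proof.
move=> tF; rewrite /rho -iterSr iterS nxt_root //; exact: tF.
Qed.

Lemma rho_root F x : isroot s F x -> rho s t F x = x.
Proof. by move=> rx; rewrite /rho iter_fix // nxt_root. Qed.

Lemma rho_adj F x y : functional s F -> term s t F -> uadj s t F x y ->
  rho s t F x = rho s t F y.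
Proof.
move=> fF tF /existsP [e /andP[eF /orP[]/andP[/eqP <- /eqP <-]]].
  by rewrite -(nxt_fun t fF eF) rho_nxt.
by rewrite -(nxt_fun t fF eF) rho_nxt.
Qed.

Lemma rho_connect F x y : functional s F -> term s t F -> connect (uadj s t F) x y ->
  rho s t F x = rho s t F y.
Proof.
move=> fF tF cxy.
have cl : closed (uadj s t F) [pred z | rho s t F z == rho s t F x].
  by move=> a b ab; rewrite !inE (rho_adj fF tF ab).
have := closed_connect cl cxy.
by rewrite !inE eqxx => /esym/eqP.
Qed.

Lemma card_components F : functional s F -> term s t F ->
  #|components s t F| = #|[set x | isroot s F x]|.
Proof.
move=> fF tF.
have -> : components s t F = [set comp s t F x | x in [set x | isroot s F x]].
  apply/setP => C; apply/imsetP/imsetP => [][x _ ->].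
    exists (rho s t F x); first by rewrite inE; exact: tF.
    apply/setP => z; rewrite !inE; apply: same_connect; first exact: connect_symF.
    exact: connect_iter.
  by exists x.
rewrite card_in_imset // => a b; rewrite !inE => ra rb hab.
have : b \in comp s t F a by rewrite hab inE connect0.
rewrite inE => /(rho_connect fF tF); by rewrite !rho_root.
Qed.

Lemma bridge F e : e \in F -> connect (uadj s t (F :\ e)) (t e) (s e) ->
  exists es vs, ucycle_in s t F es vs.
Proof.
move=> eF /connectP [p0 hp0 hl0].
case: (shortenP hp0) hl0 => p hp up _ hl.
set F' := F :\ e.
pose pe (pr : V * V) := odflt e [pick f in F' | joins s t f pr.1 pr.2].
set vs := t e :: p; set P := zip vs p.
have hP : forall pr, pr \in P -> pe pr \in F' /\ joins s t (pe pr) pr.1 pr.2.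
  move=> pr prP; move: hp; rewrite pathE => /allP /(_ _ prP) /existsP [f hf].
  rewrite /pe; case: pickP => [g /andP[gF j]|/(_ f)]; first by [].
  by rewrite hf.
exists (rcons (map pe P) e), vs.
have szP : size P = size p by apply: size2_zip; exact: leqnSn.
apply/and5P; split.
- by rewrite size_rcons.
- by rewrite size_rcons size_map szP.
- rewrite rcons_uniq; apply/andP; split.
    apply/negP => /mapP [pr prP epe]; have [] := hP pr prP.
    by rewrite -epe !inE eqxx.
  rewrite map_inj_in_uniq; first exact: zip_uniql.
  move=> a b aP bP hab; have [_ ja] := hP a aP; have [_ jb] := hP b bP.
  move: ja jb; rewrite hab; case: a b aP bP {hab} => [a1 a2] [b1 b2] aP bP /=.
  move: (pe (b1, b2)) => f.
  rewrite /joins => /orP[]/andP[/eqP h1 /eqP h2] /orP[]/andP[/eqP e1 /eqP e2].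
  + by rewrite -h1 -h2 -e1 -e2.
  + by case: (norev up aP); rewrite -h1 -h2 e1 e2.
  + by case: (norev up aP); rewrite -h1 -h2 e1 e2.
  + by rewrite -h1 -h2 -e1 -e2.
- exact: up.
apply/andP; split.
  rewrite all_rcons; apply/andP; split; first exact: eF.
  apply/allP => f /mapP [pr prP ->].
  by have [] := hP pr prP; rewrite inE => /andP[].
rewrite /vs rot1_cons zip_cons_rcons -/P -hl.
have -> : zip (rcons [seq pe i | i <- P] e) (rcons P (s e, t e))
  = rcons (zip (map pe P) (map id P)) (e, (s e, t e)).
  by rewrite zip_rcons ?map_id // size_map.
rewrite zip_map all_rcons; apply/andP; split; first by rewrite /joins /= !eqxx.
apply/allP => q /mapP [pr prP ->] /=.
by have [] := hP pr prP.
Qed.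

End G2.

Section G3.
Variables (m : nat) (E : finType) (s t : E -> 'I_m.+1).
Local Notation V := 'I_m.+1.
Implicit Types F : {set E}.

Lemma th_unique B F C u v : in_Theta s t B F -> C \in components s t F ->
  u \in C -> v \in C -> isroot s F u -> isroot s F v -> u = v.
Proof.
case=> _ _ h CF uC vC ru rv; have [b _ hb] := h C CF.
have : u \in [set z in C | [forall e in F, s e != z]] by rewrite inE uC.
have : v \in [set z in C | [forall e in F, s e != z]] by rewrite inE vC.
by rewrite hb !inE => /eqP -> /eqP ->.
Qed.

Lemma comp_in F x : comp s t F x \in components s t F.
Proof. by apply/imsetP; exists x. Qed.

Lemma in_comp F x : x \in comp s t F x.
Proof. by rewrite inE connect0. Qed.

Lemma th_rootB B F x : in_Theta s t B F -> isroot s F x -> x \in B.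
Proof.
case=> _ _ h rx; have [b bB hb] := h _ (comp_in F x).
have : x \in [set z in comp s t F x | [forall e in F, s e != z]].
  by rewrite inE in_comp.
by rewrite hb inE => /eqP ->.
Qed.

Lemma th_term B F : in_Theta s t B F -> term s t F.
Proof. by case=> ac _ _; apply: acyclic_term. Qed.

Lemma th_fun B F : in_Theta s t B F -> functional s F.
Proof.
move=> th; have [ac _ _] := th.
move=> e1 e2 e1F e2F hs; apply/eqP; apply/negPn/negP => ne.
set F' := F :\ e1.
have subF : F' \subset F by apply: subsetDl.
have ac' : acyclic s t F'.
  by move=> es vs; apply/negP => /(ucycle_sub subF); apply/negP; apply: ac.
have tF' := acyclic_term ac'.
have e2F' : e2 \in F' by rewrite !inE eq_sym ne.
have rootF : forall z, isroot s F' z -> isroot s F z.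
  move=> z /forall_inP rz; apply/forall_inP => e eF.
  case: (eqVneq e e1) => [->|ne1]; last by apply: rz; rewrite !inE ne1.
  by rewrite hs; apply: rz.
set a := t e1; set v := s e1.
have ra := tF' a; have rv := tF' v.
have cva : connect (uadj s t F) v a.
  by apply: connect1; apply/existsP; exists e1; rewrite e1F /joins !eqxx.
have h1 : rho s t F' a \in comp s t F v.
  rewrite inE; apply: connect_trans cva _; apply: (connect_subset subF).
  exact: connect_iter.
have h2 : rho s t F' v \in comp s t F v.
  rewrite inE; apply: (connect_subset subF); exact: connect_iter.
have eq := th_unique th (comp_in F v) h1 h2 (rootF _ ra) (rootF _ rv).
have [es [vs]] : exists es vs, ucycle_in s t F es vs.
  apply: (bridge e1F); rewrite -/F' -/a -/v.
  apply: (@connect_trans _ _ (rho s t F' a)); first exact: connect_iter.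
  by rewrite eq connect_symF; apply: connect_iter.
by apply/negP; apply: ac.
Qed.

End G3.
Unset Implicit Arguments.
Import Order.TTheory GRing.Theory Num.Theory.
Local Open Scope ring_scope.


Theorem lemma3p3 (R : porderZmodType) (m : nat) (E : finType)
    (s t : E -> 'I_m.+1) (pi : E -> R) (mu : E -> {set E})
    (no_loops : forall e, s e != t e)
    (hmu : edge_partition s t pi mu)
    (B : {set 'I_m.+1}) (zeta : {set E})
    (hzeta : in_Theta s t B zeta) :
  forall E1 E2 : {set E},
    in_Ezeta s t pi mu B zeta E1 ->
    in_Ezeta s t pi mu B zeta E2 ->
    in_Ezeta s t pi mu B zeta (E1 :|: E2).
Proof.
move=> E1 E2 [sub1 th1] [sub2 th2].
case: hmu => _ hcyc hiii.
set S := E1 :|: E2.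
split; first by rewrite subUset sub1 sub2.
set F12 := (zeta :\: S) :|: mustar pi mu S.
set F1 := (zeta :\: E1) :|: mustar pi mu E1 in th1.
set F2 := (zeta :\: E2) :|: mustar pi mu E2 in th2.
have fz := th_fun hzeta.
have sS : S \subset zeta :&: im_mu pi mu by rewrite subUset sub1 sub2.
have Smu : forall e', e' \in S -> e' \in zeta /\ exists2 g, pi g < 0 & e' \in mu g.
  move=> e' /(subsetP sS); rewrite !inE => /andP[-> /bigcupP [g hg he]].
  by split => //; exists g.
have mustarP : forall (X : {set E}) g, g \in mustar pi mu X ->
    pi g < 0 /\ exists2 e', e' \in X & e' \in mu g.
  move=> X g; rewrite inE => /andP[-> /existsP [e' /andP[h1 h2]]].
  by split => //; exists e'.
have mustarI : forall (X : {set E}) g e', pi g < 0 -> e' \in X -> e' \in mu g -> g \in mustar pi mu X.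
  move=> X g e' hg h1 h2; rewrite inE hg /=; apply/existsP; exists e'; by rewrite h1.
have hs : forall g e', pi g < 0 -> e' \in mu g -> s e' = s g.
  by move=> g e' hg; have [_ h _ _] := hiii g hg; apply: h.
have hdisj : forall g1 g2 e', pi g1 < 0 -> pi g2 < 0 -> e' \in mu g1 -> e' \in mu g2 -> g1 = g2.
  move=> g1 g2 e' h1 h2 m1 m2; case: (eqVneq g1 g2) => // ne.
  have [_ _ _ hd] := hiii g1 h1.
  by have := disjointFr (hd g2 h2 ne) m1; rewrite m2.
have f12 : functional s F12.
  move=> f g; rewrite !in_setU !in_setD => /orP[/andP[fS fz']|/(mustarP _ _)[nf [e1 e1S e1f]]]
                               /orP[/andP[gS gz']|/(mustarP _ _)[ng [e2 e2S e2g]]] hfg.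
  - exact: fz.
  - have [e2z _] := Smu _ e2S.
    have := fz _ _ fz' e2z; rewrite hfg (hs _ _ ng e2g) => /(_ erefl) fe.
    by rewrite fe e2S in fS.
  - have [e1z _] := Smu _ e1S.
    have := fz _ _ gz' e1z; rewrite -hfg (hs _ _ nf e1f) => /(_ erefl) ge.
    by rewrite ge e1S in gS.
  - have [e1z _] := Smu _ e1S; have [e2z _] := Smu _ e2S.
    have := fz _ _ e1z e2z; rewrite (hs _ _ nf e1f) (hs _ _ ng e2g) => /(_ hfg) ee.
    by apply: (hdisj _ _ e1) => //; rewrite ee.
have roots : forall x, isroot s F12 x = isroot s zeta x.
  move=> x; apply/forall_inP/forall_inP => [h12 e ez|hz e].
    apply/eqP => sex; case: (boolP (e \in S)) => eS.
      have [_ [g hg he]] := Smu _ eS.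
      have gF : g \in F12 by rewrite in_setU (mustarI _ _ _ hg eS he) orbT.
      by have := h12 g gF; rewrite -(hs _ _ hg he) sex eqxx.
    have eF : e \in F12 by rewrite in_setU in_setD eS ez.
    by have := h12 e eF; rewrite sex eqxx.
  rewrite in_setU in_setD => /orP[/andP[_ ez]|/(mustarP _ _)[ne [e' e'S e'e]]]; first exact: hz.
  have [e'z _] := Smu _ e'S; by rewrite -(hs _ _ ne e'e); apply: hz.
have term12 : term s t F12.
  move=> x; apply/negPn/negP => /DC [p /andP[dp hp]].
  have cnt := hcyc p dp.
  have up : uniq p by case/and3P: dp => _ /map_uniq.
  case: th1 => [ac1 _ _]; case: th2 => [ac2 _ _].
  case: (boolP (all (mem F1) p)) => [a1|/allPn [f fp fF1]].
    by have := ac1 p (map s p); rewrite (dcycle_ucycle dp a1).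
  have fF12 := allP hp f fp.
  have [nf fE2] : pi f < 0 /\ f \in mustar pi mu E2.
    have fF12' : f \in F12 := fF12; have fF1' : f \notin F1 := fF1.
    move: fF12' fF1'; rewrite /F12 /F1 !in_setU !in_setD => /orP[/andP[fS fz']|fm].
      by rewrite fz' andbT; move: fS; rewrite inE negb_or => /andP[-> _].
    have [nf [e' e'S e'f]] := mustarP _ _ fm.
    move: e'S; rewrite inE => /orP[e'1|e'2].
      by rewrite (mustarI _ _ _ nf e'1 e'f) orbT.
    by split => //; apply: (mustarI _ _ _ nf e'2 e'f).
  have a2 : all (mem F2) p.
    apply/allP => g gp; case: (eqVneq g f) => [->|ngf].
      by rewrite /= /F2 in_setU fE2 orbT.
    have := allP hp g gp; rewrite /= /F12 /F2 !in_setU !in_setD => /orP[/andP[gS gz']|gm].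
      by rewrite gz' andbT; move: gS; rewrite inE negb_or => /andP[_ ->].
    have [ng _] := mustarP _ _ gm.
    by have := count2 (a := fun e => (pi e < 0)) up gp fp ngf ng nf; rewrite ltnNge cnt.
  by have := ac2 p (map s p); rewrite (dcycle_ucycle dp a2).
have ac12 := ft_acyclic f12 term12.
split => //.
  rewrite card_components //.
  have [_ <- _] := hzeta; rewrite card_components //; last exact: th_term hzeta.
  by apply: eq_card => x; rewrite !inE roots.
move=> C /imsetP [x _ ->]; exists (rho s t F12 x).
  by apply: (th_rootB hzeta); rewrite -roots; apply: term12.
apply/setP => v; rewrite !inE; apply/andP/eqP => [[cxv rv]|->].
  by rewrite (rho_connect f12 term12 cxv) rho_root.
by split; [apply: connect_iter | apply: term12].
Qed.
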